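(* Let $\mathbb X$ be a basic space and $\mathcal D=(D,<,\rho)$ a computable partially ordered set. 1. Every partial function $F:\mathbb X\to D$ in $\mathrm{Max}_{\mathrm{PR}}[\mathbb X\to\mathcal D]\cap\mathrm{Min}_{\mathrm{PR}}[\mathbb X\to\mathcal D]$ is the restriction of a partial computable function $\mathbb X\to D$ to some $\Sigma^0_1\wedge\Pi^0_1$ subset of $\mathbb X$. In particular, every total function in $\mathrm{Max}_{\mathrm{PR}}[\mathbb X\to\mathcal D]\cap\mathrm{Min}_{\mathrm{PR}}[\mathbb X\to\mathcal D]$ is computable. 2. If $D$ has no maximal (resp. no minimal) element, then the restriction of any partial computable function $\mathbb X\to D$ to any $\Sigma^0_1\wedge\Pi^0_1$ subset of $\mathbb X$ is in $\mathrm{Max}_{\mathrm{PR}}[\mathbb X\to\mathcal D]$ (resp. $\mathrm{Min}_{\mathrm{PR}}[\mathbb X\to\mathcal D]$). 3. If $D$ has neither maximal nor minimal elements, then $\mathrm{Max}_{\mathrm{PR}}[\mathbb X\to\mathcal D]\cap\mathrm{Min}_{\mathrm{PR}}[\mathbb X\to\mathcal D]$ is exactly the family of restrictions of partial computable functions $\mathbb X\to D$ to $\Sigma^0_1\wedge\Pi^0_1$ subsets of $\mathbb X$.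
   Context: A basic space is a finite non-empty product of sets each of which is $\mathbb N$, $\mathbb Z$, or $A^*$ for some finite alphabet $A$. A computable partially ordered set is a triple $\mathcal D=(D,<,\rho)$ where $\rho:\mathbb N\to D$ is a bijection and $<$ is a strict partial order on $D$ with $\{(m,n):\rho(m)<\rho(n)\}$ computable; a partial function into $D$ is partial computable if its composition with $\rho^{-1}$ is. For a partial $f:\mathbb X\times\mathbb N\to D$ monotone increasing (resp. decreasing) in its second argument on its domain, $\max^{\mathcal D}f$ (resp. $\min^{\mathcal D}f$) is the partial function defined exactly at those $x$ for which $\{f(x,t):t\in\mathbb N,\ f(x,t)\text{ defined}\}$ is finite and non-empty, with value its maximum (resp. minimum) element. $\mathrm{Max}_{\mathrm{PR}}[\mathbb X\to\mathcal D]$ (resp. $\mathrm{Min}_{\mathrm{PR}}[\mathbb X\to\mathcal D]$) is the class of all $\max^{\mathcal D}f$ with $f$ partial computable and increasing in its second argument (resp. all $\min^{\mathcal D}f$ with $f$ partial computable and decreasing in its second argument). A set $Z\subseteq\mathbb X$ is $\Sigma^0_1\wedge\Pi^0_1$ if $Z=\{x:\exists t\,R(x,t)\wedge\forall t\,S(x,t)\}$ for computable $R,S\subseteq\mathbb X\times\mathbb N$. The restriction of a partial function $G$ to $Z$ is the partial function with domain $\mathrm{dom}(G)\cap Z$ agreeing with $G$ there. *)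

(* Defs.v *)
From Stdlib Require Import Arith ZArith List.
Import ListNotations.

Inductive prog : Type :=
| PZero : prog
| PSucc : prog
| PProj : nat -> prog
| PComp : prog -> list prog -> prog
| PRec : prog -> prog -> prog
| PMu : prog -> prog.

Inductive eval : prog -> list nat -> nat -> Prop :=
| ev_zero : forall args, eval PZero args 0
| ev_succ : forall n args, eval PSucc (n :: args) (S n)
| ev_proj : forall i args v, nth_error args i = Some v -> eval (PProj i) args v
| ev_comp : forall f gs args ys y,
    Forall2 (fun g v => eval g args v) gs ys -> eval f ys y -> eval (PComp f gs) args y
| ev_rec0 : forall f g args y, eval f args y -> eval (PRec f g) (0 :: args) y
| ev_recS : forall f g n args r y,
    eval (PRec f g) (n :: args) r -> eval g (n :: r :: args) y ->
    eval (PRec f g) (S n :: args) y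
| ev_mu : forall f args n,
    eval f (n :: args) 0 ->
    (forall k, k < n -> exists m, eval f (k :: args) (S m)) ->
    eval (PMu f) args n.

(* An atom is N, Z, or A* for a finite alphabet A, taken (up to renaming) to be {0,...,k-1}. *)
Inductive atom : Type := ANat | AInt | AWord (k : nat).

Definition atom_t (a : atom) : Type :=
  match a with
  | ANat => nat
  | AInt => Z
  | AWord k => list {i : nat | i < k}
  end.

(* A basic space is a finite NON-EMPTY product: first factor a, remaining factors l. *)
Fixpoint bsp (a : atom) (l : list atom) : Type :=
  match l with
  | [] => atom_t a
  | b :: l' => (atom_t a * bsp b l')%type
  end.

Definition enc_int (z : Z) : nat :=
  if (0 <=? z)%Z then 2 * Z.to_nat z else 2 * Z.to_nat (- z) - 1.

(* bijective base-k numeration of words *)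
Definition enc_word (k : nat) (w : list {i : nat | i < k}) : nat :=
  fold_right (fun c acc => (proj1_sig c + 1) + k * acc) 0 w.

Definition enc_atom (a : atom) : atom_t a -> nat :=
  match a return atom_t a -> nat with
  | ANat => fun n => n
  | AInt => enc_int
  | AWord k => enc_word k
  end.

Fixpoint enc (a : atom) (l : list atom) : bsp a l -> list nat :=
  match l return bsp a l -> list nat with
  | [] => fun x => [enc_atom a x]
  | b :: l' => fun x => enc_atom a (fst x) :: enc b l' (snd x)
  end.

Definition computable_poset (D : Type) (lt : D -> D -> Prop) (rho : nat -> D) : Prop :=
  (forall d, ~ lt d d) /\
  (forall d e f, lt d e -> lt e f -> lt d f) /\
  (forall m n, rho m = rho n -> m = n) /\
  (forall d, exists n, rho n = d) /\
  (exists p, forall m n,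
      (lt (rho m) (rho n) -> eval p [m; n] 1) /\ (~ lt (rho m) (rho n) -> eval p [m; n] 0)).

Definition le_of {D : Type} (lt : D -> D -> Prop) (d e : D) : Prop := d = e \/ lt d e.

(* partial function X -> D : a function X -> option D (None = undefined) *)

Definition pcomp_fun {D : Type} (rho : nat -> D) (a : atom) (l : list atom)
    (F : bsp a l -> option D) : Prop :=
  exists p, forall x m, eval p (enc a l x) m <-> F x = Some (rho m).

Definition pcomp_fun2 {D : Type} (rho : nat -> D) (a : atom) (l : list atom)
    (f : bsp a l -> nat -> option D) : Prop :=
  exists p, forall x t m, eval p (enc a l x ++ [t]) m <-> f x t = Some (rho m).

Definition comp_rel (a : atom) (l : list atom) (R : bsp a l -> nat -> Prop) : Prop :=
  exists p, forall x t,
    (R x t -> eval p (enc a l x ++ [t]) 1) /\ (~ R x t -> eval p (enc a l x ++ [t]) 0).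

Definition sigma1_and_pi1 (a : atom) (l : list atom) (Z : bsp a l -> Prop) : Prop :=
  exists R S, comp_rel a l R /\ comp_rel a l S /\
    forall x, Z x <-> ((exists t, R x t) /\ (forall t, S x t)).

Definition restriction_of {X D : Type} (F G : X -> option D) (Z : X -> Prop) : Prop :=
  forall x, (Z x -> F x = G x) /\ (~ Z x -> F x = None).

Definition values {X D : Type} (f : X -> nat -> option D) (x : X) (d : D) : Prop :=
  exists t, f x t = Some d.

Definition finite_nonempty {D : Type} (S : D -> Prop) : Prop :=
  (exists d, S d) /\ (exists L : list D, forall d, S d -> In d L).

Definition is_maximum {D : Type} (lt : D -> D -> Prop) (S : D -> Prop) (d : D) : Prop :=
  S d /\ forall e, S e -> le_of lt e d.

Definition is_minimum {D : Type} (lt : D -> D -> Prop) (S : D -> Prop) (d : D) : Prop :=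
  S d /\ forall e, S e -> le_of lt d e.

Definition increasing2 {X D : Type} (lt : D -> D -> Prop) (f : X -> nat -> option D) : Prop :=
  forall x t t' d e, t <= t' -> f x t = Some d -> f x t' = Some e -> le_of lt d e.

Definition decreasing2 {X D : Type} (lt : D -> D -> Prop) (f : X -> nat -> option D) : Prop :=
  forall x t t' d e, t <= t' -> f x t = Some d -> f x t' = Some e -> le_of lt e d.

Definition is_maxD {X D : Type} (lt : D -> D -> Prop) (f : X -> nat -> option D)
    (F : X -> option D) : Prop :=
  forall x d, F x = Some d <->
    (finite_nonempty (values f x) /\ is_maximum lt (values f x) d).

Definition is_minD {X D : Type} (lt : D -> D -> Prop) (f : X -> nat -> option D)
    (F : X -> option D) : Prop :=
  forall x d, F x = Some d <->
    (finite_nonempty (values f x) /\ is_minimum lt (values f x) d).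

Definition MaxPR {D : Type} (lt : D -> D -> Prop) (rho : nat -> D) (a : atom) (l : list atom)
    (F : bsp a l -> option D) : Prop :=
  exists f, pcomp_fun2 rho a l f /\ increasing2 lt f /\ is_maxD lt f F.

Definition MinPR {D : Type} (lt : D -> D -> Prop) (rho : nat -> D) (a : atom) (l : list atom)
    (F : bsp a l -> option D) : Prop :=
  exists f, pcomp_fun2 rho a l f /\ decreasing2 lt f /\ is_minD lt f F.

(* Main.v *)
Require Import Defs.
From Stdlib Require Import Arith ZArith List Lia Bool Classical ClassicalEpsilon.
From Stdlib Require FinFun.
Import ListNotations.

Section PI.
Variable P : prog -> Prop.
Hypothesis HZ : P PZero.
Hypothesis HS : P PSucc.
Hypothesis HP : forall i, P (PProj i).
Hypothesis HC : forall f gs, P f -> Forall P gs -> P (PComp f gs).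
Hypothesis HR : forall f g, P f -> P g -> P (PRec f g).
Hypothesis HM : forall f, P f -> P (PMu f).
Fixpoint prog_ind2 (p : prog) : P p :=
  match p with
  | PZero => HZ | PSucc => HS | PProj i => HP i
  | PComp f gs => HC f gs (prog_ind2 f)
      ((fix go (l : list prog) : Forall P l :=
         match l with [] => Forall_nil _ | g :: l' => Forall_cons _ (prog_ind2 g) (go l') end) gs)
  | PRec f g => HR f g (prog_ind2 f) (prog_ind2 g)
  | PMu f => HM f (prog_ind2 f)
  end.
End PI.

Section EI.
Variable P : prog -> list nat -> nat -> Prop.
Hypothesis HZ : forall args, P PZero args 0.
Hypothesis HS : forall n args, P PSucc (n :: args) (S n).
Hypothesis HP : forall i args v, nth_error args i = Some v -> P (PProj i) args v.
Hypothesis HC : forall f gs args ys y,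
  Forall2 (fun g v => eval g args v /\ P g args v) gs ys -> eval f ys y -> P f ys y ->
  P (PComp f gs) args y.
Hypothesis HR0 : forall f g args y, eval f args y -> P f args y -> P (PRec f g) (0 :: args) y.
Hypothesis HRS : forall f g n args r y,
    eval (PRec f g) (n :: args) r -> P (PRec f g) (n :: args) r ->
    eval g (n :: r :: args) y -> P g (n :: r :: args) y ->
    P (PRec f g) (S n :: args) y.
Hypothesis HM : forall f args n,
    eval f (n :: args) 0 -> P f (n :: args) 0 ->
    (forall k, k < n -> exists m, eval f (k :: args) (S m) /\ P f (k :: args) (S m)) ->
    P (PMu f) args n.
Fixpoint eval_ind2 p a y (e : eval p a y) {struct e} : P p a y :=
  match e with
  | ev_zero args => HZ args
  | ev_succ n args => HS n args
  | ev_proj i args v H => HP i args v H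
  | ev_comp f gs args ys y H2 Hf => HC f gs args ys y
      ((fix go gs ys (h : Forall2 (fun g v => eval g args v) gs ys)
          : Forall2 (fun g v => eval g args v /\ P g args v) gs ys :=
          match h with
          | Forall2_nil _ => Forall2_nil _
          | @Forall2_cons _ _ _ g v gs' ys' hg hr => @Forall2_cons _ _ _ g v gs' ys' (conj hg (eval_ind2 _ _ _ hg)) (go _ _ hr)
          end) gs ys H2) Hf (eval_ind2 _ _ _ Hf)
  | ev_rec0 f g args y H => HR0 f g args y H (eval_ind2 _ _ _ H)
  | ev_recS f g n args r y H1 H2 => HRS f g n args r y H1 (eval_ind2 _ _ _ H1) H2 (eval_ind2 _ _ _ H2)
  | ev_mu f args n H0 Hk => HM f args n H0 (eval_ind2 _ _ _ H0)
      (fun k hk => match Hk k hk with ex_intro _ m e => ex_intro _ m (conj e (eval_ind2 _ _ _ e)) end)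
  end.
End EI.

Fixpoint bev (s : nat) (p : prog) (args : list nat) {struct p} : nat :=
  match p with
  | PZero => 1
  | PSucc => match args with n :: _ => S (S n) | [] => 0 end
  | PProj i => match nth_error args i with Some v => S v | None => 0 end
  | PComp f gs =>
      fold_right (fun v acc => match v with 0 => 0 | S _ => acc end)
        (bev s f (map pred (map (fun g => bev s g args) gs))) (map (fun g => bev s g args) gs)
  | PRec f g =>
      match args with
      | [] => 0
      | n :: rest => nat_rect (fun _ => nat) (bev s f rest)
          (fun k r => match r with 0 => 0 | S r' => bev s g (k :: r' :: rest) end) n
      end
  | PMu f => pred (nat_rect (fun _ => nat) 0
       (fun j st => match st with
          | 0 => match bev s f (j :: args) with 0 => 1 | 1 => S (S j) | _ => 0 end
          | _ => st end) s)
  end.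
Definition mustate (h : nat -> nat) (s : nat) : nat :=
  nat_rect (fun _ => nat) 0 (fun j st => match st with
          | 0 => match h j with 0 => 1 | 1 => S (S j) | _ => 0 end
          | _ => st end) s.

Lemma mustate_spec h j :
  (mustate h j = 0 -> forall i, i < j -> 2 <= h i) /\
  (forall k, mustate h j = S (S k) -> k < j /\ h k = 1 /\ forall i, i < k -> 2 <= h i).
Proof.
  induction j as [|j [IH1 IH2]].
  - split; [intros _ i Hi; lia | intros k H; discriminate].
  - unfold mustate in *; simpl.
    destruct (nat_rect _ _ _ j) as [|m] eqn:E.
    + specialize (IH1 eq_refl).
      destruct (h j) as [|[|hj]] eqn:Ehj.
      * split; [discriminate| intros k H; discriminate].
      * split; [discriminate|]. intros k H; injection H as <-. repeat split; auto.
      * split.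
        -- intros _ i Hi. destruct (Nat.eq_dec i j) as [->|]. rewrite Ehj; lia. apply IH1; lia.
        -- intros k H; discriminate.
    + split; [discriminate|]. intros k H. rewrite H in IH2. destruct (IH2 k eq_refl) as (?&?&?).
      repeat split; auto.
Qed.

Lemma mustate_comp h n :
  (forall i, i < n -> 2 <= h i) -> h n = 1 ->
  forall j, (j <= n -> mustate h j = 0) /\ (n < j -> mustate h j = S (S n)).
Proof.
  intros H1 H2 j. induction j as [|j [IH1 IH2]].
  - split; [reflexivity | lia].
  - unfold mustate in *; simpl. split.
    + intros Hj. rewrite IH1 by lia. specialize (H1 j ltac:(lia)).
      destruct (h j) as [|[|hj]]; lia.
    + intros Hj. destruct (Nat.eq_dec j n) as [->|Hne].
      * rewrite IH1 by lia. rewrite H2. reflexivity.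
      * rewrite IH2 by lia. reflexivity.
Qed.

Lemma fold_guard_S b vs y :
  fold_right (fun v acc => match v with 0 => 0 | S _ => acc end) b vs = S y ->
  Forall (fun v => v <> 0) vs /\ b = S y.
Proof.
  induction vs as [|v vs IH]; simpl; intros H.
  - split; auto.
  - destruct v; [discriminate|]. destruct (IH H). split; auto.
Qed.

Lemma bev_sound : forall p s args y, bev s p args = S y -> eval p args y.
Proof.
  induction p using prog_ind2; intros s args y Hb; simpl in Hb.
  - injection Hb as <-; constructor.
  - destruct args; [discriminate|]. injection Hb as <-; constructor.
  - destruct (nth_error args i) eqn:E; [|discriminate]. injection Hb as <-; constructor; auto.
  - apply fold_guard_S in Hb as [Hall Hf].
    econstructor; [|apply IHp with (s := s); exact Hf].
    clear Hf. induction H as [|g gs Hg Hgs IH]; simpl in *; constructor.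
    + inversion Hall; subst. apply Hg with (s := s).
      destruct (bev s g args); [contradiction|reflexivity].
    + inversion Hall; subst; auto.
  - destruct args as [|n rest]; [discriminate|].
    revert y Hb. induction n as [|n IHn]; simpl; intros y Hb.
    + constructor. eapply IHp1; eauto.
    + destruct (nat_rect _ _ _ n) as [|r] eqn:E; [discriminate|].
      econstructor; [apply IHn; reflexivity|]. eapply IHp2; eauto.
  - change (pred (mustate (fun j => bev s p (j :: args)) s) = S y) in Hb.
    destruct (mustate _ s) as [|[|k]] eqn:E; try discriminate.
    simpl in Hb; injection Hb as ->.
    destruct (proj2 (mustate_spec _ s) y E) as (_&H1&H2).
    constructor.
    + eapply IHp; eauto.
    + intros k Hk. specialize (H2 k Hk).
      destruct (bev s p (k :: args)) as [|[|m]] eqn:E2; try lia.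
      exists m. eapply IHp; eauto.
Qed.

Definition evstab p args y := exists s0, forall s, s0 <= s -> bev s p args = S y.

Lemma bounded_choice (P : nat -> nat -> Prop) n :
  (forall k, k < n -> exists s0, forall s, s0 <= s -> P k s) ->
  exists s0, forall k, k < n -> forall s, s0 <= s -> P k s.
Proof.
  induction n as [|n IH]; intros H.
  - exists 0; intros; lia.
  - destruct IH as [a Ha]. { intros k Hk; apply H; lia. }
    destruct (H n ltac:(lia)) as [b Hb].
    exists (max a b). intros k Hk s Hs.
    destruct (Nat.eq_dec k n) as [->|]. apply Hb; lia. apply Ha; lia.
Qed.

Lemma bev_complete : forall p args y, eval p args y -> evstab p args y.
Proof.
  apply eval_ind2; unfold evstab.
  - intros. exists 0; reflexivity.
  - intros. exists 0; reflexivity.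
  - intros i args v H. exists 0; intros; simpl; rewrite H; reflexivity.
  - intros f gs args ys y HF _ [sf Hsf].
    assert (exists s0, forall s, s0 <= s -> map (fun g => bev s g args) gs = map S ys) as [sg Hsg].
    { clear Hsf. induction HF as [|g v gs ys [_ [a Ha]] _ [b Hb]].
      - exists 0; reflexivity.
      - exists (max a b). intros s Hs. simpl. rewrite Ha, Hb by lia. reflexivity. }
    exists (max sf sg). intros s Hs. simpl. rewrite Hsg by lia.
    rewrite map_map. simpl. rewrite map_id.
    rewrite Hsf by lia. clear. induction ys; simpl; auto.
  - intros f g args y _ [a Ha]. exists a. intros s Hs. simpl. apply Ha; auto.
  - intros f g n args r y _ [a Ha] _ [b Hb]. exists (max a b). intros s Hs.
    specialize (Ha s ltac:(lia)). simpl in Ha |- *. rewrite Ha. apply Hb; lia.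
  - intros f args n _ [a Ha] Hk.
    destruct (bounded_choice (fun k s => exists m, bev s f (k :: args) = S (S m)) n) as [b Hb].
    { intros k Hk'. destruct (Hk k Hk') as [m [_ [c Hc]]]. exists c. intros s Hs. exists m; auto. }
    exists (max (max a b) (S n)). intros s Hs.
    change (pred (mustate (fun j => bev s f (j :: args)) s) = S n).
    assert (H1 : forall i, i < n -> 2 <= bev s f (i :: args)).
    { intros i Hi. destruct (Hb i Hi s ltac:(lia)) as [m Hm]. rewrite Hm. lia. }
    assert (H2 : bev s f (n :: args) = 1) by (apply Ha; lia).
    rewrite (proj2 (mustate_comp (fun j => bev s f (j :: args)) n H1 H2 s)); auto. lia.
Qed.

Lemma eval_det p args y1 y2 : eval p args y1 -> eval p args y2 -> y1 = y2.
Proof.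
  intros H1 H2. apply bev_complete in H1 as [a Ha]. apply bev_complete in H2 as [b Hb].
  specialize (Ha (max a b) ltac:(lia)). specialize (Hb (max a b) ltac:(lia)). congruence.
Qed.
Definition computes (p : prog) (n : nat) (F : list nat -> nat) : Prop :=
  forall a, length a = n -> eval p a (F a).

Lemma computes_ext p n F G : computes p n F -> (forall a, length a = n -> F a = G a) -> computes p n G.
Proof. intros H E a Ha. rewrite <- E by auto. auto. Qed.

Lemma computes_det p n F a y : computes p n F -> length a = n -> eval p a y -> y = F a.
Proof. intros H Ha E. eapply eval_det; eauto. Qed.

Lemma comp_c f m F gs n Gs :
  computes f m F -> Forall2 (fun g G => computes g n G) gs Gs -> length gs = m ->
  computes (PComp f gs) n (fun a => F (map (fun G => G a) Gs)).
Proof.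
  intros Hf Hg Hl a Ha. apply ev_comp with (ys := map (fun G => G a) Gs).
  - clear Hl Hf. induction Hg; simpl; constructor; auto.
  - apply Hf. rewrite length_map. rewrite <- Hl. symmetry. eapply Forall2_length; eauto.
Qed.

Lemma comp_c' f m F gs n Gs H :
  computes f m F -> Forall2 (fun g G => computes g n G) gs Gs -> length gs = m ->
  (forall a, length a = n -> F (map (fun G => G a) Gs) = H a) ->
  computes (PComp f gs) n H.
Proof. intros. eapply computes_ext; [eapply comp_c; eauto|]. auto. Qed.

Lemma zero_c n : computes PZero n (fun _ => 0).
Proof. intros a _; constructor. Qed.

Lemma proj_c i n : i < n -> computes (PProj i) n (fun a => nth i a 0).
Proof. intros Hi a Ha. constructor. apply nth_error_nth'. lia. Qed.

Lemma succ1_c : computes PSucc 1 (fun a => S (hd 0 a)).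
Proof. intros [|x [|]] H; simpl in H; try discriminate. constructor. Qed.

Lemma succ_c X n Xf : computes X n Xf -> computes (PComp PSucc [X]) n (fun a => S (Xf a)).
Proof.
  intros H. eapply comp_c'; [apply succ1_c| repeat constructor; eauto | reflexivity|].
  intros; reflexivity.
Qed.

Fixpoint constp (c : nat) : prog := match c with 0 => PZero | S c => PComp PSucc [constp c] end.
Lemma const_c c n : computes (constp c) n (fun _ => c).
Proof. induction c; simpl. apply zero_c. apply succ_c; auto. Qed.

Lemma rec_c f n F g Gf :
  computes f n F -> computes g (S (S n)) Gf ->
  computes (PRec f g) (S n) (fun a => match a with [] => 0 | k :: r =>
     nat_rect (fun _ => nat) (F r) (fun j acc => Gf (j :: acc :: r)) k end).
Proof.
  intros Hf Hg [|k r] Ha; simpl in Ha; [discriminate|]. injection Ha as Ha.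
  induction k; simpl.
  - constructor. auto.
  - econstructor; [exact IHk|]. apply Hg. simpl; lia.
Qed.

Definition PredP := PRec PZero (PProj 0).
Lemma pred1_c : computes PredP 1 (fun a => pred (hd 0 a)).
Proof.
  eapply computes_ext; [apply rec_c; [apply (zero_c 0)| apply proj_c; lia]|].
  intros [|k [|]] H; simpl in H; try discriminate. destruct k; reflexivity.
Qed.
Lemma pred_c X n Xf : computes X n Xf -> computes (PComp PredP [X]) n (fun a => pred (Xf a)).
Proof.
  intros H. eapply comp_c'; [apply pred1_c| repeat constructor; eauto | reflexivity|].
  intros; reflexivity.
Qed.

Definition CondP := PRec (PProj 1) (PProj 2).
Definition Cond C X Y := PComp CondP [C; X; Y].
Lemma cond_c C X Y n Cf Xf Yf :
  computes C n Cf -> computes X n Xf -> computes Y n Yf ->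
  computes (Cond C X Y) n (fun a => match Cf a with 0 => Yf a | S _ => Xf a end).
Proof.
  intros HC HX HY.
  eapply comp_c' with (m := 3); [apply rec_c; apply proj_c; lia | repeat constructor; eauto | reflexivity |].
  intros a _. simpl. destruct (Cf a); reflexivity.
Qed.

Definition projs i k := map PProj (seq i k).
Lemma projs_c i k n : i + k <= n ->
  Forall2 (fun g G => computes g n G) (projs i k) (map (fun j a => nth j a 0) (seq i k)).
Proof.
  revert i; induction k; intros i H; simpl; constructor.
  - apply proj_c; lia.
  - apply IHk; lia.
Qed.

Lemma map_nth_seq (pre xs post : list nat) :
  map (fun j => nth j (pre ++ xs ++ post) 0) (seq (length pre) (length xs)) = xs.
Proof.
  revert pre; induction xs as [|x xs IH]; intros pre; simpl; auto.
  f_equal.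
  - rewrite app_nth2 by lia. rewrite Nat.sub_diag. reflexivity.
  - specialize (IH (pre ++ [x])). rewrite <- app_assoc in IH. simpl in IH.
    rewrite length_app in IH. simpl in IH. rewrite Nat.add_1_r in IH. exact IH.
Qed.

Lemma map_nth_seq' (pre xs : list nat) i :
  i = length pre -> map (fun j => nth j (pre ++ xs) 0) (seq i (length xs)) = xs.
Proof. intros ->. pose proof (map_nth_seq pre xs []) as E. rewrite app_nil_r in E. exact E. Qed.

Lemma nat_rect_ext' (b : nat) (f g : nat -> nat -> nat) k :
  (forall j acc, f j acc = g j acc) -> nat_rect (fun _ => nat) b f k = nat_rect (fun _ => nat) b g k.
Proof. intros H; induction k; simpl; auto. rewrite IHk; auto. Qed.

Lemma map_projs i k (a : list nat) :
  map (fun G => G a) (map (fun j a => nth j a 0) (seq i k)) = map (fun j => nth j a 0) (seq i k).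
Proof. rewrite map_map. reflexivity. Qed.

Lemma Forall2_app' {A B} (R : A -> B -> Prop) l1 l2 m1 m2 :
  Forall2 R l1 m1 -> Forall2 R l2 m2 -> Forall2 R (l1 ++ l2) (m1 ++ m2).
Proof. intros; apply Forall2_app; auto. Qed.

Lemma least_zero (h : nat -> nat) : (exists k, h k = 0) -> exists k, h k = 0 /\ forall j, j < k -> h j <> 0.
Proof.
  intros [k Hk]. induction k as [k IH] using lt_wf_ind.
  destruct (classic (exists j, j < k /\ h j = 0)) as [[j [Hj1 Hj2]]|N].
  - apply (IH j Hj1 Hj2).
  - exists k. split; auto. intros j Hj E. apply N. eauto.
Qed.

Lemma mu_eval T n Tf args k : computes T (S n) Tf -> length args = n ->
  Tf (k :: args) = 0 -> (forall j, j < k -> Tf (j :: args) <> 0) -> eval (PMu T) args k.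
Proof.
  intros HT Ha H0 Hj. constructor.
  - rewrite <- H0. apply HT. simpl; lia.
  - intros j Hjk. specialize (Hj j Hjk). destruct (Tf (j :: args)) as [|m] eqn:E; [contradiction|].
    exists m. rewrite <- E. apply HT; simpl; lia.
Qed.

Lemma mu_inv T n Tf args k : computes T (S n) Tf -> length args = n ->
  eval (PMu T) args k -> Tf (k :: args) = 0 /\ (forall j, j < k -> Tf (j :: args) <> 0).
Proof.
  intros HT Ha E. inversion E as [| | | | | |f' a' k' H0' H3]; subst. split.
  - symmetry. eapply computes_det; eauto.
  - intros j Hj. destruct (H3 j Hj) as [m Hm]. apply computes_det with (n := S (length args)) (F := Tf) in Hm; auto.
    congruence.
Qed.
Definition SS X := PComp PSucc [PComp PSucc [X]].

Fixpoint compile (p : prog) (n : nat) : prog :=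
 match p with
 | PZero => constp 1
 | PSucc => match n with 0 => PZero | _ => SS (PProj 1) end
 | PProj i => if i <? n then PComp PSucc [PProj (S i)] else PZero
 | PComp f gs =>
     fold_right (fun B acc => Cond B acc PZero)
       (PComp (compile f (length gs)) (PProj 0 :: map (fun B => PComp PredP [B]) (map (fun g => compile g n) gs)))
       (map (fun g => compile g n) gs)
 | PRec f g => match n with 0 => PZero | S n' =>
     PComp (PRec (compile f n')
       (Cond (PProj 1) (PComp (compile g (S (S n'))) (PProj 2 :: PProj 0 :: PComp PredP [PProj 1] :: projs 3 n')) PZero))
       (PProj 1 :: PProj 0 :: projs 2 n')
     end
 | PMu f =>
     let T := PComp (compile f (S n)) (PProj 2 :: PProj 0 :: projs 3 n) in
     PComp PredP [PComp (PRec PZero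
        (Cond (PProj 1) (PProj 1)
           (Cond T (Cond (PComp PredP [T]) PZero (SS (PProj 0))) (constp 1))))
        (PProj 0 :: PProj 0 :: projs 1 n)]
 end.

Lemma guard_c Bgs Vs k body BF :
  Forall2 (fun B V => computes B k V) Bgs Vs -> computes body k BF ->
  computes (fold_right (fun B acc => Cond B acc PZero) body Bgs) k
    (fun a => fold_right (fun v acc => match v with 0 => 0 | S _ => acc end) (BF a) (map (fun V => V a) Vs)).
Proof.
  intros H Hb. induction H; simpl.
  - auto.
  - eapply computes_ext; [apply cond_c; [eauto|eauto|apply zero_c]|].
    intros a _. reflexivity.
Qed.

Lemma SS_c X n Xf : computes X n Xf -> computes (SS X) n (fun a => S (S (Xf a))).
Proof. intros; apply succ_c, succ_c; auto. Qed.

Lemma len_tl (a : list nat) n : length a = S n -> length (tl a) = n.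
Proof. destruct a; simpl; congruence. Qed.

Lemma bev_c : forall p n, computes (compile p n) (S n) (fun a => bev (hd 0 a) p (tl a)).
Proof.
  induction p using prog_ind2; intros n; simpl.
  - exact (const_c 1 _).
  - destruct n.
    + intros [|s [|]] H; simpl in H; try discriminate. constructor.
    + eapply computes_ext; [apply SS_c, proj_c; lia|].
      intros [|s [|x r]] H; simpl in H; try discriminate. reflexivity.
  - destruct (Nat.ltb_spec i n).
    + eapply computes_ext; [apply succ_c, proj_c; lia|].
      intros [|s r] H1; simpl in H1; try discriminate. simpl.
      rewrite nth_error_nth' with (d := 0) by lia. reflexivity.
    + eapply computes_ext; [apply zero_c|].
      intros [|s r] H1; simpl in H1; try discriminate. simpl.
      rewrite (proj2 (nth_error_None r i)) by lia. reflexivity.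
  - set (Vs := map (fun g a => bev (hd 0 a) g (tl a)) gs).
    assert (HV : Forall2 (fun B V => computes B (S n) V) (map (fun g => compile g n) gs) Vs).
    { subst Vs. clear IHp. induction H; simpl; constructor; auto. }
    eapply computes_ext; [apply guard_c; [exact HV|]|].
    + eapply comp_c' with (m := S (length gs)) (Gs := (fun a => nth 0 a 0) :: map (fun V a => pred (V a)) Vs).
      * apply IHp.
      * constructor; [apply proj_c; lia|]. clear -HV. induction HV; simpl; constructor; auto.
        apply pred_c; auto.
      * simpl. rewrite !length_map. reflexivity.
      * intros a _. reflexivity.
    + intros a Ha. subst Vs. simpl.
      destruct a as [|s r]; simpl in Ha; try discriminate. simpl. rewrite !map_map. reflexivity.
  - destruct n as [|n'].
    + eapply computes_ext; [apply zero_c|].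
      intros [|s [|]] H; simpl in H; try discriminate. reflexivity.
    + eapply comp_c' with (m := S (S n'))
        (Gs := (fun a => nth 1 a 0) :: (fun a => nth 0 a 0) :: map (fun j a => nth j a 0) (seq 2 n')).
      * apply rec_c; [apply IHp1|].
        apply cond_c; [apply proj_c; lia| |apply zero_c].
        eapply comp_c' with (m := S (S (S n')))
          (Gs := (fun a => nth 2 a 0) :: (fun a => nth 0 a 0) :: (fun a => pred (nth 1 a 0))
                  :: map (fun j a => nth j a 0) (seq 3 n')).
        -- apply IHp2.
        -- constructor; [apply proj_c; lia|]. constructor; [apply proj_c; lia|].
           constructor; [apply pred_c, proj_c; lia|]. apply projs_c; lia.
        -- simpl. unfold projs. rewrite length_map, length_seq. reflexivity.
        -- intros a Ha. reflexivity.
      * constructor; [apply proj_c; lia|]. constructor; [apply proj_c; lia|]. apply projs_c; lia.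
      * simpl. unfold projs. rewrite length_map, length_seq. reflexivity.
      * intros [|s [|k r]] Ha; simpl in Ha; try discriminate. injection Ha as Ha.
        simpl. rewrite map_map.
        assert (E : map (fun j => nth j (s :: k :: r) 0) (seq 2 n') = r).
        { rewrite <- Ha. exact (map_nth_seq' [s; k] r 2 eq_refl). }
        rewrite E. simpl. apply nat_rect_ext'. intros j [|acc]; [reflexivity|]. simpl.
        subst n'. rewrite map_map. simpl. 
        change (bev s p2 (j :: acc :: map (fun x => nth x ([j; S acc; s] ++ r) 0) (seq 3 (length r))) =
                bev s p2 (j :: acc :: r)).
        rewrite (map_nth_seq' [j; S acc; s] r 3) by reflexivity. reflexivity.
  - set (T := PComp (compile p (S n)) (PProj 2 :: PProj 0 :: projs 3 n)).
    assert (HT : computes T (S (S (S n))) (fun a => bev (nth 2 a 0) p (nth 0 a 0 :: skipn 3 a))).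
    { eapply comp_c' with (m := S (S n))
          (Gs := (fun a => nth 2 a 0) :: (fun a => nth 0 a 0) :: map (fun j a => nth j a 0) (seq 3 n)).
      - apply IHp.
      - constructor; [apply proj_c; lia|]. constructor; [apply proj_c; lia|]. apply projs_c; lia.
      - simpl. unfold projs. rewrite length_map, length_seq. reflexivity.
      - intros [|j [|st [|s r]]] Ha; simpl in Ha; try discriminate. injection Ha as Ha. subst n.
        simpl. rewrite map_map. 
        change (bev s p (j :: map (fun x => nth x ([j; st; s] ++ r) 0) (seq 3 (length r))) = bev s p (j :: r)).
        rewrite (map_nth_seq' [j; st; s] r 3) by reflexivity. reflexivity. }
    eapply computes_ext; [apply pred_c|].
    + eapply comp_c' with (m := S (S n))
          (Gs := (fun a => nth 0 a 0) :: (fun a => nth 0 a 0) :: map (fun j a => nth j a 0) (seq 1 n)).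
      * apply rec_c; [apply zero_c|].
        apply cond_c; [apply proj_c; lia|apply proj_c; lia|].
        apply cond_c; [exact HT| |exact (const_c 1 _)].
        apply cond_c; [apply pred_c; exact HT|apply zero_c|apply SS_c, proj_c; lia].
      * constructor; [apply proj_c; lia|]. constructor; [apply proj_c; lia|]. apply projs_c; lia.
      * simpl. unfold projs. rewrite length_map, length_seq. reflexivity.
      * intros a Ha. reflexivity.
    + intros [|s r] Ha; simpl in Ha; try discriminate. injection Ha as Ha. subst n.
      simpl. rewrite map_map.
      change (map (fun x => nth x (s :: r) 0) (seq 1 (length r))) with
        (map (fun x => nth x ([s] ++ r) 0) (seq 1 (length r))).
      rewrite (map_nth_seq' [s] r 1) by reflexivity.
      f_equal. apply nat_rect_ext'. intros j [|acc]; [|reflexivity].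
      destruct (bev s p (j :: r)) as [|[|]]; reflexivity.
Qed.
Lemma eval_eq p a y y' : eval p a y -> y = y' -> eval p a y'.
Proof. intros H ->; exact H. Qed.

Lemma comp_ev f gs a vs y : Forall2 (fun g v => eval g a v) gs vs -> eval f vs y -> eval (PComp f gs) a y.
Proof. intros; econstructor; eauto. Qed.

Lemma proj_ev i a v : nth_error a i = Some v -> eval (PProj i) a v.
Proof. apply ev_proj. Qed.

Lemma projs_ev pre xs post k L : k = length pre -> L = length xs ->
  Forall2 (fun g v => eval g (pre ++ xs ++ post) v) (projs k L) xs.
Proof.
  intros -> ->. revert pre; induction xs as [|x xs IH]; intros pre; simpl; constructor.
  - constructor. rewrite nth_error_app2 by lia. rewrite Nat.sub_diag. reflexivity.
  - specialize (IH (pre ++ [x])). rewrite <- app_assoc in IH. simpl in IH.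
    rewrite length_app in IH. simpl in IH. rewrite Nat.add_1_r in IH. exact IH.
Qed.

Lemma projs_ev' pre xs k L : k = length pre -> L = length xs ->
  Forall2 (fun g v => eval g (pre ++ xs) v) (projs k L) xs.
Proof. intros. pose proof (projs_ev pre xs [] k L H H0). rewrite app_nil_r in H1. exact H1. Qed.

Lemma zero_ev a : eval PZero a 0.
Proof. constructor. Qed.

Lemma succ_ev X a x : eval X a x -> eval (PComp PSucc [X]) a (S x).
Proof. intros. eapply comp_ev; [repeat constructor; eauto|constructor]. Qed.

Lemma const_ev c a : eval (constp c) a c.
Proof. induction c; simpl; [constructor|apply succ_ev; auto]. Qed.

Lemma pred_ev X a x : eval X a x -> eval (PComp PredP [X]) a (pred x).
Proof. intros. eapply comp_ev; [repeat constructor; eauto|]. apply pred1_c. reflexivity. Qed.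

Lemma cond_ev C X Y a c x y : eval C a c -> eval X a x -> eval Y a y ->
  eval (Cond C X Y) a (match c with 0 => y | S _ => x end).
Proof.
  intros. eapply comp_ev; [repeat constructor; eauto|].
  eapply eval_eq; [apply (rec_c (PProj 1) 2 (fun a => nth 1 a 0) (PProj 2) (fun a => nth 2 a 0));
     [apply proj_c; lia|apply proj_c; lia|reflexivity]|].
  simpl. destruct c; reflexivity.
Qed.

Definition nz (x : nat) : bool := negb (x =? 0).
Definition b2n (b : bool) : nat := if b then 1 else 0.

Definition IsZ X := Cond X PZero (constp 1).
Lemma isz_ev X a x : eval X a x -> eval (IsZ X) a (b2n (x =? 0)).
Proof. intros. eapply eval_eq; [apply cond_ev; [eauto|apply zero_ev|apply const_ev]|]. destruct x; reflexivity. Qed.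

Definition AndC X Y := Cond X (Cond Y (constp 1) PZero) PZero.
Lemma and_ev X Y a x y : eval X a x -> eval Y a y -> eval (AndC X Y) a (b2n (nz x && nz y)).
Proof.
  intros. eapply eval_eq; [apply cond_ev; [eauto|apply cond_ev; [eauto|apply const_ev|apply zero_ev]|apply zero_ev]|].
  destruct x, y; reflexivity.
Qed.

Definition OrC X Y := Cond X (constp 1) (Cond Y (constp 1) PZero).
Lemma or_ev X Y a x y : eval X a x -> eval Y a y -> eval (OrC X Y) a (b2n (nz x || nz y)).
Proof.
  intros. eapply eval_eq; [apply cond_ev; [eauto|apply const_ev|apply cond_ev; [eauto|apply const_ev|apply zero_ev]]|].
  destruct x, y; reflexivity.
Qed.

Definition SubP := PRec (PProj 0) (PComp PredP [PProj 1]).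
Lemma sub_ev U V a u v : eval U a u -> eval V a v -> eval (PComp SubP [V; U]) a (u - v).
Proof.
  intros. eapply comp_ev; [repeat constructor; eauto|].
  eapply eval_eq; [apply (rec_c (PProj 0) 1 (fun a => nth 0 a 0) _ (fun a => pred (nth 1 a 0)));
     [apply proj_c; lia|apply pred_c, proj_c; lia|reflexivity]|].
  simpl. clear. induction v; simpl; [lia|]. rewrite IHv. lia.
Qed.

Definition EqC U V := Cond (PComp SubP [V; U]) PZero (Cond (PComp SubP [U; V]) PZero (constp 1)).
Lemma eq_ev U V a u v : eval U a u -> eval V a v -> eval (EqC U V) a (b2n (u =? v)).
Proof.
  intros. eapply eval_eq; [apply cond_ev; [apply sub_ev; eauto|apply zero_ev|
     apply cond_ev; [apply sub_ev; eauto|apply zero_ev|apply const_ev]]|].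
  destruct (u - v) eqn:E1; destruct (v - u) eqn:E2; simpl;
  destruct (Nat.eqb_spec u v); auto; lia.
Qed.

Definition bexf (h : nat -> nat) (c : nat) : nat :=
  nat_rect (fun _ => nat) 0 (fun j acc => match acc with 0 => b2n (nz (h j)) | _ => 1 end) c.

Lemma bexf_spec h c : (bexf h c = 1 /\ exists j, j < c /\ h j <> 0) \/ (bexf h c = 0 /\ forall j, j < c -> h j = 0).
Proof.
  induction c as [|c IH].
  - right; split; auto; intros; lia.
  - change (bexf h (S c)) with (match bexf h c with 0 => b2n (nz (h c)) | _ => 1 end).
    destruct IH as [[E [j [Hj Hh]]]|[E Hall]]; rewrite E.
    + left; split; auto. exists j; split; auto.
    + destruct (h c) eqn:Ec; simpl.
      * right; split; auto. intros j Hj. destruct (Nat.eq_dec j c) as [->|]; auto. apply Hall; lia.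
      * left; split; auto. exists c; split; [lia|congruence].
Qed.

Definition Bex P n := PRec PZero (Cond (PProj 1) (constp 1) (Cond (PComp P (PProj 0 :: projs 2 n)) (constp 1) PZero)).
Lemma bex_ev P n args h c : length args = n -> (forall j, eval P (j :: args) (h j)) ->
  eval (Bex P n) (c :: args) (bexf h c).
Proof.
  intros Hl HP. induction c as [|c IH].
  - constructor. constructor.
  - econstructor; [exact IH|].
    eapply eval_eq; [apply cond_ev; [apply proj_ev; reflexivity|apply const_ev|
      apply cond_ev; [eapply comp_ev; [|apply HP]|apply const_ev|apply zero_ev]]|].
    + constructor; [apply proj_ev; reflexivity|]. apply (projs_ev' [c; bexf h c] args); simpl; auto.
    + simpl. destruct (bexf h c); [|reflexivity]. destruct (h c); reflexivity.
Qed.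

Lemma total_fn p n : (forall a, length a = n -> exists y, eval p a y) -> exists F, computes p n F.
Proof.
  intros H.
  exists (fun a => match excluded_middle_informative (length a = n) with
                   | left Hl => proj1_sig (constructive_indefinite_description _ (H a Hl))
                   | right _ => 0 end).
  intros a Ha. destruct (excluded_middle_informative (length a = n)) as [Hl|]; [|contradiction].
  exact (proj2_sig (constructive_indefinite_description _ (H a Hl))).
Qed.
Lemma nz_b2n b : nz (b2n b) = b.
Proof. destruct b; reflexivity. Qed.

Definition Call B ks k L jt := PComp B (PProj ks :: projs k L ++ [PProj jt]).

Lemma call_ev B (fv : nat -> list nat -> nat -> nat) L pre xs ks jt s t k :
  (forall s xs t, length xs = L -> eval B (s :: xs ++ [t]) (fv s xs t)) -> length xs = L ->
  k = length pre -> nth_error pre ks = Some s -> nth_error pre jt = Some t ->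
  eval (Call B ks k L jt) (pre ++ xs) (fv s xs t).
Proof.
  intros HB Hl Hk H1 H2. eapply comp_ev; [|apply HB; exact Hl].
  constructor.
  - constructor. rewrite nth_error_app1; auto. apply nth_error_Some. congruence.
  - apply Forall2_app; [apply projs_ev'; auto|].
    constructor; [|constructor]. constructor. rewrite nth_error_app1; auto. apply nth_error_Some. congruence.
Qed.

Lemma mu_ev T args h k : (forall j, eval T (j :: args) (h j)) -> h k = 0 -> (forall j, j < k -> h j <> 0) ->
  eval (PMu T) args k.
Proof.
  intros HT H0 Hj. constructor.
  - rewrite <- H0; auto.
  - intros j Hjk. specialize (Hj j Hjk). destruct (h j) as [|m] eqn:E; [contradiction|].
    exists m. rewrite <- E; auto.
Qed.

Definition V2 Bf Bg L := AndC (Call Bf 2 3 L 1) (EqC (Call Bf 2 3 L 1) (Call Bg 2 3 L 0)).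
Definition V1 Bf Bg L := PComp (Bex (V2 Bf Bg L) (S (S L))) (PProj 1 :: PProj 0 :: PProj 1 :: projs 2 L).
Definition V0 Bf Bg L := PComp (Bex (V1 Bf Bg L) (S L)) (PProj 0 :: PProj 0 :: projs 1 L).
Definition Rprog Bf Bg L := PComp (V0 Bf Bg L) (PProj L :: projs 0 L).

Definition rval (fv gv : nat -> list nat -> nat -> nat) s xs :=
  bexf (fun t1 => bexf (fun t2 => b2n (nz (fv s xs t1) && nz (b2n (fv s xs t1 =? gv s xs t2)))) s) s.

Lemma V0_ev Bf Bg L fv gv s xs :
  (forall s xs t, length xs = L -> eval Bf (s :: xs ++ [t]) (fv s xs t)) ->
  (forall s xs t, length xs = L -> eval Bg (s :: xs ++ [t]) (gv s xs t)) ->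
  length xs = L -> eval (V0 Bf Bg L) (s :: xs) (rval fv gv s xs).
Proof.
  intros HF HG Hl. eapply comp_ev.
  - constructor; [apply proj_ev; reflexivity|]. constructor; [apply proj_ev; reflexivity|].
    apply (projs_ev' [s] xs); simpl; auto.
  - apply bex_ev; [simpl; auto|]. intros t1.
    eapply comp_ev.
    + constructor; [apply proj_ev; reflexivity|]. constructor; [apply proj_ev; reflexivity|].
      constructor; [apply proj_ev; reflexivity|]. apply (projs_ev' [t1; s] xs); simpl; auto.
    + apply bex_ev; [simpl; auto|]. intros t2.
      apply and_ev; [|apply eq_ev];
        [apply (call_ev Bf fv L [t2; t1; s])|apply (call_ev Bf fv L [t2; t1; s])|apply (call_ev Bg gv L [t2; t1; s])];
        auto.
Qed.

Lemma Rprog_ev Bf Bg L fv gv s xs :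
  (forall s xs t, length xs = L -> eval Bf (s :: xs ++ [t]) (fv s xs t)) ->
  (forall s xs t, length xs = L -> eval Bg (s :: xs ++ [t]) (gv s xs t)) ->
  length xs = L -> eval (Rprog Bf Bg L) (xs ++ [s]) (rval fv gv s xs).
Proof.
  intros HF HG Hl. eapply comp_ev; [|apply V0_ev; auto].
  constructor.
  - constructor. rewrite nth_error_app2 by lia. rewrite Hl, Nat.sub_diag. reflexivity.
  - apply (projs_ev [] xs [s]); auto.
Qed.
Definition PredC X := PComp PredP [X].
Definition LEC pLT X Y := OrC (EqC X Y) (PComp pLT [X; Y]).
Definition leval (ltf : nat -> nat -> nat) u v := b2n (nz (b2n (u =? v)) || nz (ltf u v)).

Lemma le_ev pLT ltf X Y a u v : (forall u v, eval pLT [u; v] (ltf u v)) ->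
  eval X a u -> eval Y a v -> eval (LEC pLT X Y) a (leval ltf u v).
Proof.
  intros HL HX HY. apply or_ev; [apply eq_ev; auto|]. eapply comp_ev; [|apply HL].
  repeat constructor; auto.
Qed.

Definition Viol Bf Bg pLT L :=
  let F1 := Call Bf 3 4 L 2 in let G2 := Call Bg 3 4 L 1 in
  let F3 := Call Bf 3 4 L 0 in let G3 := Call Bg 3 4 L 0 in
  AndC (AndC F1 (EqC F1 G2))
       (OrC (AndC F3 (IsZ (LEC pLT (PredC F3) (PredC F1))))
            (AndC G3 (IsZ (LEC pLT (PredC F1) (PredC G3))))).

Definition violval (fv gv : nat -> list nat -> nat -> nat) ltf s xs t1 t2 t3 :=
  let f1 := fv s xs t1 in let g2 := gv s xs t2 in let f3 := fv s xs t3 in let g3 := gv s xs t3 in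
  b2n (nz (b2n (nz f1 && nz (b2n (f1 =? g2)))) &&
       nz (b2n (nz (b2n (nz f3 && nz (b2n (leval ltf (pred f3) (pred f1) =? 0)))) ||
                nz (b2n (nz g3 && nz (b2n (leval ltf (pred f1) (pred g3) =? 0))))))).

Definition W2 Bf Bg pLT L := PComp (Bex (Viol Bf Bg pLT L) (S (S (S L))))
   (PProj 2 :: PProj 0 :: PProj 1 :: PProj 2 :: projs 3 L).
Definition W1 Bf Bg pLT L := PComp (Bex (W2 Bf Bg pLT L) (S (S L))) (PProj 1 :: PProj 0 :: PProj 1 :: projs 2 L).
Definition W0 Bf Bg pLT L := PComp (Bex (W1 Bf Bg pLT L) (S L)) (PProj 0 :: PProj 0 :: projs 1 L).
Definition Sprog Bf Bg pLT L := IsZ (PComp (W0 Bf Bg pLT L) (PProj L :: projs 0 L)).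

Definition sval fv gv ltf s xs :=
  b2n (bexf (fun t1 => bexf (fun t2 => bexf (fun t3 => violval fv gv ltf s xs t1 t2 t3) s) s) s =? 0).

Lemma Sprog_ev Bf Bg pLT L fv gv ltf s xs :
  (forall s xs t, length xs = L -> eval Bf (s :: xs ++ [t]) (fv s xs t)) ->
  (forall s xs t, length xs = L -> eval Bg (s :: xs ++ [t]) (gv s xs t)) ->
  (forall u v, eval pLT [u; v] (ltf u v)) ->
  length xs = L -> eval (Sprog Bf Bg pLT L) (xs ++ [s]) (sval fv gv ltf s xs).
Proof.
  intros HF HG HL Hl. apply isz_ev. eapply comp_ev.
  { constructor.
    - constructor. rewrite nth_error_app2 by lia. rewrite Hl, Nat.sub_diag. reflexivity.
    - apply (projs_ev [] xs [s]); auto. }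
  eapply comp_ev.
  - constructor; [apply proj_ev; reflexivity|]. constructor; [apply proj_ev; reflexivity|].
    apply (projs_ev' [s] xs); simpl; auto.
  - apply bex_ev; [simpl; auto|]. intros t1.
    eapply comp_ev.
    + constructor; [apply proj_ev; reflexivity|]. constructor; [apply proj_ev; reflexivity|].
      constructor; [apply proj_ev; reflexivity|]. apply (projs_ev' [t1; s] xs); simpl; auto.
    + apply bex_ev; [simpl; auto|]. intros t2.
      eapply comp_ev.
      * constructor; [apply proj_ev; reflexivity|]. constructor; [apply proj_ev; reflexivity|].
        constructor; [apply proj_ev; reflexivity|]. constructor; [apply proj_ev; reflexivity|].
        apply (projs_ev' [t2; t1; s] xs); simpl; auto.
      * apply bex_ev; [simpl; auto|]. intros t3.
        assert (F1 : eval (Call Bf 3 4 L 2) ([t3; t2; t1; s] ++ xs) (fv s xs t1)) by (apply call_ev; auto).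
        assert (G2 : eval (Call Bg 3 4 L 1) ([t3; t2; t1; s] ++ xs) (gv s xs t2)) by (apply call_ev; auto).
        assert (F3 : eval (Call Bf 3 4 L 0) ([t3; t2; t1; s] ++ xs) (fv s xs t3)) by (apply call_ev; auto).
        assert (G3 : eval (Call Bg 3 4 L 0) ([t3; t2; t1; s] ++ xs) (gv s xs t3)) by (apply call_ev; auto).
        apply and_ev; [apply and_ev; [auto|apply eq_ev; auto]|].
        apply or_ev; apply and_ev; auto; apply isz_ev; apply le_ev; auto; apply pred_ev; auto.
Qed.

Definition N2 Bf Bg L := AndC (EqC (Call Bf 3 4 L 1) (PComp PSucc [PProj 2])) (EqC (Call Bg 3 4 L 0) (PComp PSucc [PProj 2])).
Definition N1 Bf Bg L := PComp (Bex (N2 Bf Bg L) (S (S (S L)))) (PProj 2 :: PProj 0 :: PProj 1 :: PProj 2 :: projs 3 L).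
Definition N0 Bf Bg L := PComp (Bex (N1 Bf Bg L) (S (S L))) (PProj 1 :: PProj 0 :: PProj 1 :: projs 2 L).
Definition n0val (fv gv : nat -> list nat -> nat -> nat) s xs m :=
  bexf (fun t1 => bexf (fun t2 => b2n (nz (b2n (fv s xs t1 =? S m)) && nz (b2n (gv s xs t2 =? S m)))) s) s.

Lemma N0_ev Bf Bg L fv gv s xs m :
  (forall s xs t, length xs = L -> eval Bf (s :: xs ++ [t]) (fv s xs t)) ->
  (forall s xs t, length xs = L -> eval Bg (s :: xs ++ [t]) (gv s xs t)) ->
  length xs = L -> eval (N0 Bf Bg L) (m :: s :: xs) (n0val fv gv s xs m).
Proof.
  intros HF HG Hl. eapply comp_ev.
  - constructor; [apply proj_ev; reflexivity|]. constructor; [apply proj_ev; reflexivity|].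
    constructor; [apply proj_ev; reflexivity|].
    apply (projs_ev' [m; s] xs); simpl; auto.
  - apply bex_ev; [simpl; auto|]. intros t1.
    eapply comp_ev.
    + constructor; [apply proj_ev; reflexivity|]. constructor; [apply proj_ev; reflexivity|].
      constructor; [apply proj_ev; reflexivity|]. constructor; [apply proj_ev; reflexivity|].
      apply (projs_ev' [t1; m; s] xs); simpl; auto.
    + apply bex_ev; [simpl; auto|]. intros t2.
      apply and_ev; apply eq_ev;
        [apply (call_ev Bf fv L [t2; t1; m; s])| |apply (call_ev Bg gv L [t2; t1; m; s])| ];
        auto; apply succ_ev; apply proj_ev; reflexivity.
Qed.

Lemma projs_all xs L : length xs = L -> Forall2 (fun g v => eval g xs v) (projs 0 L) xs.
Proof. intros Hl. pose proof (projs_ev [] xs [] 0 L eq_refl (eq_sym Hl)). rewrite app_nil_r in H. exact H. Qed.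

Definition Gprog Bf Bg L :=
  PComp (PMu (IsZ (N0 Bf Bg L))) (PComp (PMu (IsZ (V0 Bf Bg L))) (projs 0 L) :: projs 0 L).

Lemma Gprog_ev Bf Bg L fv gv xs s m :
  (forall s xs t, length xs = L -> eval Bf (s :: xs ++ [t]) (fv s xs t)) ->
  (forall s xs t, length xs = L -> eval Bg (s :: xs ++ [t]) (gv s xs t)) ->
  length xs = L ->
  rval fv gv s xs <> 0 -> (forall s', s' < s -> rval fv gv s' xs = 0) ->
  n0val fv gv s xs m <> 0 -> (forall m', m' < m -> n0val fv gv s xs m' = 0) ->
  eval (Gprog Bf Bg L) xs m.
Proof.
  intros HF HG Hl H1 H2 H3 H4. eapply comp_ev.
  - constructor.
    + eapply comp_ev; [apply projs_all; auto|].
      apply mu_ev with (h := fun s => b2n (rval fv gv s xs =? 0)) (k := s).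
      * intros j. apply isz_ev. apply V0_ev; auto.
      * cbv beta. destruct (rval fv gv s xs); [contradiction|reflexivity].
      * intros j Hj. rewrite H2 by auto; discriminate.
    + apply projs_all; auto.
  - apply mu_ev with (h := fun m => b2n (n0val fv gv s xs m =? 0)).
    + intros j. apply isz_ev. apply N0_ev; auto.
    + cbv beta. destruct (n0val fv gv s xs m); [contradiction|reflexivity].
    + intros j Hj. rewrite H4 by auto; discriminate.
Qed.
Lemma b2n_ne0 b : b2n b <> 0 <-> b = true.
Proof. destruct b; simpl; split; intros H; try congruence; exfalso; apply H; reflexivity. Qed.
Lemma nz_true x : nz x = true <-> x <> 0.
Proof. unfold nz. destruct x; simpl; split; intros H; try congruence; exfalso; apply H; reflexivity. Qed.
Lemma bexf_ne0 h c : bexf h c <> 0 <-> exists j, j < c /\ h j <> 0.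
Proof.
  destruct (bexf_spec h c) as [[E H]|[E H]]; rewrite E; split.
  - intros _. exact H.
  - intros _; discriminate.
  - intros X; exfalso; apply X; reflexivity.
  - intros [j [Hj Hh]]. exfalso. apply Hh, H, Hj.
Qed.
Lemma bexf_01 h c : bexf h c = 0 \/ bexf h c = 1.
Proof. destruct (bexf_spec h c) as [[E _]|[E _]]; auto. Qed.
Lemma b2n_01 b : b2n b = 0 \/ b2n b = 1.
Proof. destruct b; auto. Qed.

Lemma rval_spec fv gv s xs : rval fv gv s xs <> 0 <->
  exists t1 t2, t1 < s /\ t2 < s /\ fv s xs t1 <> 0 /\ fv s xs t1 = gv s xs t2.
Proof.
  unfold rval. rewrite bexf_ne0. split.
  - intros [t1 [H1 H2]]. apply bexf_ne0 in H2 as [t2 [H3 H4]].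
    apply b2n_ne0, andb_true_iff in H4 as [H4 H5]. rewrite nz_b2n, Nat.eqb_eq in H5.
    apply nz_true in H4. exists t1, t2. auto.
  - intros (t1 & t2 & H1 & H2 & H3 & H4). exists t1. split; auto. apply bexf_ne0. exists t2. split; auto.
    apply b2n_ne0, andb_true_iff. rewrite nz_b2n, Nat.eqb_eq, nz_true. auto.
Qed.

Lemma leval_spec ltf u v : leval ltf u v <> 0 <-> u = v \/ ltf u v <> 0.
Proof.
  unfold leval. rewrite b2n_ne0, orb_true_iff, nz_b2n, Nat.eqb_eq, nz_true. tauto.
Qed.

Lemma violval_spec fv gv ltf s xs t1 t2 t3 : violval fv gv ltf s xs t1 t2 t3 <> 0 <->
  fv s xs t1 <> 0 /\ fv s xs t1 = gv s xs t2 /\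
  ((fv s xs t3 <> 0 /\ leval ltf (pred (fv s xs t3)) (pred (fv s xs t1)) = 0) \/
   (gv s xs t3 <> 0 /\ leval ltf (pred (fv s xs t1)) (pred (gv s xs t3)) = 0)).
Proof.
  unfold violval. cbv zeta.
  repeat first [rewrite b2n_ne0 | rewrite nz_b2n | rewrite andb_true_iff | rewrite orb_true_iff
    | rewrite Nat.eqb_eq | rewrite nz_true].
  tauto.
Qed.

Lemma sval_spec fv gv ltf s xs : sval fv gv ltf s xs <> 0 <->
  forall t1 t2 t3, t1 < s -> t2 < s -> t3 < s -> violval fv gv ltf s xs t1 t2 t3 = 0.
Proof.
  unfold sval. rewrite b2n_ne0, Nat.eqb_eq. split.
  - intros E t1 t2 t3 H1 H2 H3. destruct (Nat.eq_dec (violval fv gv ltf s xs t1 t2 t3) 0) as [|N]; auto.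
    exfalso. revert E. apply bexf_ne0. exists t1; split; auto. apply bexf_ne0. exists t2; split; auto.
    apply bexf_ne0. exists t3; split; auto.
  - intros H. destruct (bexf_01 (fun t1 => bexf (fun t2 => bexf (fun t3 => violval fv gv ltf s xs t1 t2 t3) s) s) s)
      as [E|E]; auto.
    exfalso. assert (E' : bexf (fun t1 => bexf (fun t2 => bexf (fun t3 => violval fv gv ltf s xs t1 t2 t3) s) s) s <> 0) by lia.
    apply bexf_ne0 in E' as [t1 [H1 E1]]. apply bexf_ne0 in E1 as [t2 [H2 E2]].
    apply bexf_ne0 in E2 as [t3 [H3 E3]]. apply E3, H; auto.
Qed.

Lemma n0val_spec fv gv s xs m : n0val fv gv s xs m <> 0 <->
  exists t1 t2, t1 < s /\ t2 < s /\ fv s xs t1 = S m /\ gv s xs t2 = S m.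
Proof.
  unfold n0val. rewrite bexf_ne0. split.
  - intros [t1 [H1 H2]]. apply bexf_ne0 in H2 as [t2 [H3 H4]].
    apply b2n_ne0, andb_true_iff in H4 as [H4 H5]. rewrite nz_b2n, Nat.eqb_eq in H4, H5.
    exists t1, t2. auto.
  - intros (t1 & t2 & H1 & H2 & H3 & H4). exists t1. split; auto. apply bexf_ne0. exists t2. split; auto.
    apply b2n_ne0, andb_true_iff. rewrite !nz_b2n, !Nat.eqb_eq. auto.
Qed.

Lemma least_ne0 (h : nat -> nat) : (exists k, h k <> 0) -> exists k, h k <> 0 /\ forall j, j < k -> h j = 0.
Proof.
  intros [k Hk]. induction k as [k IH] using lt_wf_ind.
  destruct (classic (exists j, j < k /\ h j <> 0)) as [[j [Hj1 Hj2]]|N].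
  - apply (IH j Hj1 Hj2).
  - exists k. split; auto. intros j Hj. destruct (Nat.eq_dec (h j) 0); auto. exfalso; apply N; eauto.
Qed.

Lemma enc_len a l (x : bsp a l) : length (enc a l x) = S (length l).
Proof. revert a x; induction l as [|b l IH]; intros a x; simpl; auto. Qed.

Lemma prog_fun {D : Type} (rho : nat -> D) (inj : forall m n, rho m = rho n -> m = n) a l p :
  exists G : bsp a l -> option D, pcomp_fun rho a l G /\ forall x m, eval p (enc a l x) m <-> G x = Some (rho m).
Proof.
  exists (fun x => match excluded_middle_informative (exists y, eval p (enc a l x) y) with
                   | left H => Some (rho (proj1_sig (constructive_indefinite_description _ H)))
                   | right _ => None end).
  assert (K : forall x m, eval p (enc a l x) m <->
     (match excluded_middle_informative (exists y, eval p (enc a l x) y) with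
                   | left H => Some (rho (proj1_sig (constructive_indefinite_description _ H)))
                   | right _ => None end) = Some (rho m)).
  { intros x m. destruct (excluded_middle_informative _) as [H|H].
    - destruct (constructive_indefinite_description _ H) as [y Hy]; simpl. split.
      + intros Hm. rewrite (eval_det _ _ _ _ Hm Hy). reflexivity.
      + intros E. injection E as E. apply inj in E. subst; auto.
    - split; [intros Hm; exfalso; eauto|discriminate]. }
  split; [exists p|]; exact K.
Qed.

Lemma prog_fun2 {D : Type} (rho : nat -> D) (inj : forall m n, rho m = rho n -> m = n) a l p :
  exists f : bsp a l -> nat -> option D, pcomp_fun2 rho a l f /\
     forall x t m, eval p (enc a l x ++ [t]) m <-> f x t = Some (rho m).
Proof.
  exists (fun x t => match excluded_middle_informative (exists y, eval p (enc a l x ++ [t]) y) with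
                   | left H => Some (rho (proj1_sig (constructive_indefinite_description _ H)))
                   | right _ => None end).
  assert (K : forall x t m, eval p (enc a l x ++ [t]) m <->
     (match excluded_middle_informative (exists y, eval p (enc a l x ++ [t]) y) with
                   | left H => Some (rho (proj1_sig (constructive_indefinite_description _ H)))
                   | right _ => None end) = Some (rho m)).
  { intros x t m. destruct (excluded_middle_informative _) as [H|H].
    - destruct (constructive_indefinite_description _ H) as [y Hy]; simpl. split.
      + intros Hm. rewrite (eval_det _ _ _ _ Hm Hy). reflexivity.
      + intros E. injection E as E. apply inj in E. subst; auto.
    - split; [intros Hm; exfalso; eauto|discriminate]. }
  split; [exists p|]; exact K.
Qed.
Lemma le_antisym {D : Type} (lt : D -> D -> Prop) (irr : forall d, ~ lt d d)
  (trans : forall d e f, lt d e -> lt e f -> lt d f) d e :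
  le_of lt d e -> le_of lt e d -> d = e.
Proof.
  intros [H1|H1] [H2|H2]; auto. exfalso; apply (irr d); eauto.
Qed.

Lemma ltf_exists {D : Type} (lt : D -> D -> Prop) (rho : nat -> D) pLT :
  (forall m n, (lt (rho m) (rho n) -> eval pLT [m; n] 1) /\ (~ lt (rho m) (rho n) -> eval pLT [m; n] 0)) ->
  exists ltf : nat -> nat -> nat, (forall u v, eval pLT [u; v] (ltf u v)) /\
     (forall u v, ltf u v <> 0 <-> lt (rho u) (rho v)).
Proof.
  intros Hp. destruct (total_fn pLT 2) as [LTF HF].
  { intros [|u [|v [|]]] H; simpl in H; try discriminate.
    destruct (classic (lt (rho u) (rho v))) as [E|E]; eexists; [apply (proj1 (Hp u v))|apply (proj2 (Hp u v))]; exact E. }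
  exists (fun u v => LTF [u; v]). split.
  - intros u v. apply HF; reflexivity.
  - intros u v. assert (E := HF [u; v] eq_refl). split.
    + intros H. destruct (classic (lt (rho u) (rho v))) as [K|K]; auto.
      apply (proj2 (Hp u v)) in K. rewrite (eval_det _ _ _ _ E K) in H. congruence.
    + intros K. apply (proj1 (Hp u v)) in K. rewrite (eval_det _ _ _ _ E K). discriminate.
Qed.

Lemma rval_01 fv gv s xs : rval fv gv s xs = 0 \/ rval fv gv s xs = 1.
Proof. apply bexf_01. Qed.
Lemma sval_01 fv gv ltf s xs : sval fv gv ltf s xs = 0 \/ sval fv gv ltf s xs = 1.
Proof. apply b2n_01. Qed.

Lemma part1 a l D lt rho (HD : computable_poset D lt rho) (F : bsp a l -> option D) :
  MaxPR lt rho a l F -> MinPR lt rho a l F ->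
  exists (G : bsp a l -> option D) (Z : bsp a l -> Prop),
    pcomp_fun rho a l G /\ sigma1_and_pi1 a l Z /\ restriction_of F G Z.
Proof.
  intros [f [[pf Hpf] [Hinc Hmax]]] [g [[pg Hpg] [_ Hmin]]].
  destruct HD as (irr & trans & inj & surj & [pLT HpLT]).
  destruct (ltf_exists lt rho pLT HpLT) as [ltf [HLT Hltf]].
  set (L := S (length l)).
  set (fv := fun s xs t => bev s pf (xs ++ [t])).
  set (gv := fun s xs t => bev s pg (xs ++ [t])).
  set (Bf := compile pf (S L)). set (Bg := compile pg (S L)).
  assert (HBf : forall s xs t, length xs = L -> eval Bf (s :: xs ++ [t]) (fv s xs t)).
  { intros s xs t Hl. apply (bev_c pf (S L) (s :: xs ++ [t])). simpl. rewrite length_app; simpl; lia. }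
  assert (HBg : forall s xs t, length xs = L -> eval Bg (s :: xs ++ [t]) (gv s xs t)).
  { intros s xs t Hl. apply (bev_c pg (S L) (s :: xs ++ [t])). simpl. rewrite length_app; simpl; lia. }
  assert (Hlen : forall x, length (enc a l x) = L) by (intros; apply enc_len).
  assert (A1f : forall x t m s, fv s (enc a l x) t = S m -> f x t = Some (rho m)).
  { intros x t m s H. apply Hpf. eapply bev_sound; eauto. }
  assert (A1g : forall x t m s, gv s (enc a l x) t = S m -> g x t = Some (rho m)).
  { intros x t m s H. apply Hpg. eapply bev_sound; eauto. }
  assert (A2f : forall x t m, f x t = Some (rho m) -> exists s0, forall s, s0 <= s -> fv s (enc a l x) t = S m).
  { intros x t m H. apply Hpf in H. apply bev_complete in H. exact H. }
  assert (A2g : forall x t m, g x t = Some (rho m) -> exists s0, forall s, s0 <= s -> gv s (enc a l x) t = S m).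
  { intros x t m H. apply Hpg in H. apply bev_complete in H. exact H. }
  set (Good := fun x d => (exists t, f x t = Some d) /\ (exists t, g x t = Some d) /\
      (forall t e, f x t = Some e -> le_of lt e d) /\ (forall t e, g x t = Some e -> le_of lt d e)).
  assert (Gd_iff : forall x d, F x = Some d <-> Good x d).
  { intros x d. split.
    - intros H. destruct (proj1 (Hmax x d) H) as [_ [[t Ht] Hm]].
      destruct (proj1 (Hmin x d) H) as [_ [[t' Ht'] Hn]].
      repeat split; eauto.
      + intros t2 e He. apply Hm. exists t2; auto.
      + intros t2 e He. apply Hn. exists t2; auto.
    - intros (Hf1 & Hg1 & Hfb & Hgb). apply Hmax. destruct Hf1 as [t1 Ht1]. split; [split|].
      + exists d, t1; auto.
      + exists (flat_map (fun t => match f x t with Some e => [e] | None => [] end) (seq 0 (S t1))).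
        intros e [t He].
        destruct (Nat.le_gt_cases t t1) as [Hle|Hgt].
        * apply in_flat_map. exists t. split; [apply in_seq; lia|]. rewrite He. left; auto.
        * assert (e = d).
          { apply (le_antisym lt irr trans); [eapply Hfb; eauto|]. eapply Hinc; [|exact Ht1|exact He]. lia. }
          subst e. apply in_flat_map. exists t1. split; [apply in_seq; lia|]. rewrite Ht1. left; auto.
      + split; [exists t1; auto|]. intros e [t He]. eapply Hfb; eauto. }
  assert (le_code : forall k m, k = m \/ ltf k m <> 0 <-> le_of lt (rho k) (rho m)).
  { intros k m. rewrite Hltf. unfold le_of. split; [intros [->|H]; auto|].
    intros [E|E]; auto. }
  assert (match_d : forall x d t1 t2 e, Good x d -> f x t1 = Some e -> g x t2 = Some e -> e = d).
  { intros x d t1 t2 e (_&_&Hfb&Hgb) H1 H2. apply (le_antisym lt irr trans); eauto. }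
  set (Z := fun x => (exists s, rval fv gv s (enc a l x) = 1) /\ (forall s, sval fv gv ltf s (enc a l x) = 1)).
  assert (Rgood : forall x d, Good x d -> exists s, rval fv gv s (enc a l x) = 1).
  { intros x d Hg. destruct Hg as ([t1 H1] & [t2 H2] & _ & _).
    destruct (surj d) as [m <-].
    destruct (A2f _ _ _ H1) as [a1 Ha1]. destruct (A2g _ _ _ H2) as [a2 Ha2].
    exists (a1 + a2 + t1 + t2 + 1).
    destruct (rval_01 fv gv (a1 + a2 + t1 + t2 + 1) (enc a l x)) as [E|E]; [|exact E].
    exfalso. assert (K : rval fv gv (a1 + a2 + t1 + t2 + 1) (enc a l x) <> 0).
    { apply rval_spec. exists t1, t2. rewrite Ha1, Ha2 by lia. repeat split; try lia. }
    apply K. exact E. }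
  assert (Zgood : forall x, Z x <-> exists d, Good x d).
  { intros x. split.
    - intros [[s0 Hs0] HS].
      assert (K : rval fv gv s0 (enc a l x) <> 0) by lia.
      apply rval_spec in K as (t1 & t2 & Ht1 & Ht2 & Hne & Heq).
      destruct (fv s0 (enc a l x) t1) as [|m] eqn:Ef; [contradiction|].
      exists (rho m).
      assert (F1 : f x t1 = Some (rho m)) by (eapply A1f; eauto).
      assert (G2 : g x t2 = Some (rho m)) by (eapply A1g; rewrite <- Heq; eauto).
      destruct (A2f _ _ _ F1) as [a1 Ha1]. destruct (A2g _ _ _ G2) as [a2 Ha2].
      split; [eauto|split; [eauto|split]].
      + intros t e He. destruct (surj e) as [k <-].
        destruct (A2f _ _ _ He) as [a3 Ha3].
        set (s' := a1 + a2 + a3 + t1 + t2 + t + 1).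
        assert (V : violval fv gv ltf s' (enc a l x) t1 t2 t = 0).
        { apply (proj1 (sval_spec fv gv ltf s' (enc a l x))); [rewrite HS; discriminate| unfold s'; lia..]. }
        apply le_code. apply leval_spec. intros E. revert V. apply violval_spec.
        rewrite Ha1, Ha2, Ha3 by (unfold s'; lia). simpl. split; [discriminate|split; [reflexivity|left; split; [discriminate|exact E]]].
      + intros t e He. destruct (surj e) as [k <-].
        destruct (A2g _ _ _ He) as [a3 Ha3].
        set (s' := a1 + a2 + a3 + t1 + t2 + t + 1).
        assert (V : violval fv gv ltf s' (enc a l x) t1 t2 t = 0).
        { apply (proj1 (sval_spec fv gv ltf s' (enc a l x))); [rewrite HS; discriminate| unfold s'; lia..]. }
        apply le_code. apply leval_spec. intros E. revert V. apply violval_spec.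
        rewrite Ha1, Ha2, Ha3 by (unfold s'; lia). simpl. split; [discriminate|split; [reflexivity|right; split; [discriminate|exact E]]].
    - intros [d Hd]. split; [eapply Rgood; eauto|].
      intros s. destruct (sval_01 fv gv ltf s (enc a l x)) as [E|E]; [|exact E].
      exfalso. assert (K : sval fv gv ltf s (enc a l x) <> 0).
      { apply sval_spec. intros t1 t2 t3 _ _ _.
        destruct (Nat.eq_dec (violval fv gv ltf s (enc a l x) t1 t2 t3) 0) as [|N]; auto. exfalso.
        apply violval_spec in N as (N1 & N2 & N3).
        destruct (fv s (enc a l x) t1) as [|m1] eqn:Ef1; [contradiction|].
        assert (F1 : f x t1 = Some (rho m1)) by (eapply A1f; eauto).
        assert (G2 : g x t2 = Some (rho m1)) by (eapply A1g; rewrite <- N2; eauto).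
        assert (Em := match_d x d t1 t2 _ Hd F1 G2). subst d.
        destruct Hd as (_ & _ & Hfb & Hgb). simpl in N3.
        destruct N3 as [[N4 N5]|[N4 N5]].
        - destruct (fv s (enc a l x) t3) as [|e] eqn:Ef3; [contradiction|]. simpl in N5.
          assert (F3 : f x t3 = Some (rho e)) by (eapply A1f; eauto).
          apply Hfb in F3. apply le_code in F3. apply leval_spec in F3. contradiction.
        - destruct (gv s (enc a l x) t3) as [|e] eqn:Eg3; [contradiction|]. simpl in N5.
          assert (G3 : g x t3 = Some (rho e)) by (eapply A1g; eauto).
          apply Hgb in G3. apply le_code in G3. apply leval_spec in G3. contradiction. }
      apply K. exact E. }
  destruct (prog_fun rho inj a l (Gprog Bf Bg L)) as [G [HGp HGe]].
  assert (GoodG : forall x d, Good x d -> G x = Some d).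
  { intros x d Hd. destruct (surj d) as [m <-]. apply HGe.
    destruct (least_ne0 (fun s => rval fv gv s (enc a l x))) as [s [Hs1 Hs2]].
    { destruct (Rgood x _ Hd) as [s Hs]. exists s. rewrite Hs. discriminate. }
    assert (Key : forall m', n0val fv gv s (enc a l x) m' <> 0 -> m' = m).
    { intros m' Hm'. apply n0val_spec in Hm' as (t1 & t2 & _ & _ & E1 & E2).
      apply A1f in E1. apply A1g in E2. apply inj. eapply match_d; eauto. }
    apply (Gprog_ev Bf Bg L fv gv (enc a l x) s m HBf HBg (Hlen x) Hs1 Hs2).
    - apply rval_spec in Hs1 as (t1 & t2 & Ht1 & Ht2 & Hne & Heq).
      destruct (fv s (enc a l x) t1) as [|m'] eqn:Ef; [contradiction|].
      assert (m' = m).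
      { apply Key. apply n0val_spec. exists t1, t2. split; [exact Ht1|split; [exact Ht2|split; [exact Ef|]]].
        rewrite <- Heq. reflexivity. }
      subst m'. apply n0val_spec. exists t1, t2. split; [exact Ht1|split; [exact Ht2|split; [exact Ef|]]].
      rewrite <- Heq. reflexivity.
    - intros m' Hm'. destruct (Nat.eq_dec (n0val fv gv s (enc a l x) m') 0) as [|N]; auto.
      apply Key in N. lia. }
  exists G, Z. split; [exact HGp|split].
  - exists (fun x t => rval fv gv t (enc a l x) = 1), (fun x t => sval fv gv ltf t (enc a l x) = 1).
    split; [|split].
    + exists (Rprog Bf Bg L). intros x t. split.
      * intros H. rewrite <- H. apply Rprog_ev; auto.
      * intros H. assert (E : rval fv gv t (enc a l x) = 0).
        { destruct (rval_01 fv gv t (enc a l x)) as [E|E]; auto. contradiction. }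
        rewrite <- E. apply Rprog_ev; auto.
    + exists (Sprog Bf Bg pLT L). intros x t. split.
      * intros H. rewrite <- H. apply Sprog_ev; auto.
      * intros H. assert (E : sval fv gv ltf t (enc a l x) = 0).
        { destruct (sval_01 fv gv ltf t (enc a l x)) as [E|E]; auto. contradiction. }
        rewrite <- E. apply Sprog_ev; auto.
    + intros x. unfold Z. tauto.
  - intros x. split.
    + intros Hz. apply Zgood in Hz as [d Hd]. rewrite (GoodG x d Hd). apply Gd_iff; auto.
    + intros Hz. destruct (F x) as [d|] eqn:E; auto. exfalso. apply Hz, Zgood. exists d. apply Gd_iff; auto.
Qed.
Lemma list_inj {D : Type} (h : nat -> D) (Lst : list D) :
  (forall k, In (h k) Lst) -> (forall i j, h i = h j -> i = j) -> False.
Proof.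
  intros Hin Hinj.
  assert (Hn : NoDup (map h (seq 0 (S (length Lst))))).
  { apply FinFun.Injective_map_NoDup; [exact Hinj|apply seq_NoDup]. }
  apply NoDup_incl_length with (l' := Lst) in Hn.
  - rewrite length_map, length_seq in Hn. lia.
  - intros e He. apply in_map_iff in He as [k [<- _]]. apply Hin.
Qed.

Lemma Forall2_det gs a vs vs' :
  Forall2 (fun g v => eval g a v) gs vs -> Forall2 (fun g v => eval g a v) gs vs' -> vs = vs'.
Proof.
  intros H; revert vs'; induction H; intros vs' H'; inversion H'; subst; auto.
  f_equal; eauto using eval_det.
Qed.

Definition SuccT pLT := IsZ (PComp pLT [PProj 1; PProj 0]).
Definition SuccMu pLT := PMu (SuccT pLT).
Definition ChainP pLT := PRec (PProj 0) (PComp (SuccMu pLT) [PProj 1]).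

Lemma chain_ev pLT (succf : nat -> nat) c d :
  (forall m, eval (SuccMu pLT) [m] (succf m)) -> eval (ChainP pLT) [c; d] (Nat.iter c succf d).
Proof.
  intros Hs. induction c as [|c IH]; simpl.
  - constructor. constructor. reflexivity.
  - econstructor; [exact IH|]. eapply comp_ev; [|apply Hs]. repeat constructor.
Qed.

Definition Cprog pS L :=
  PRec (IsZ (PComp pS (projs 0 L ++ [PZero])))
       (Cond (PProj 1) (PComp PSucc [PProj 1]) (IsZ (PComp pS (projs 2 L ++ [PComp PSucc [PProj 0]])))).

Definition cval (sf : nat -> nat) t :=
  nat_rect (fun _ => nat) (b2n (sf 0 =? 0))
    (fun j acc => match acc with 0 => b2n (sf (S j) =? 0) | S _ => S acc end) t.

Lemma Cprog_ev pS L xs sf t : length xs = L -> (forall t, eval pS (xs ++ [t]) (sf t)) ->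
  eval (Cprog pS L) (t :: xs) (cval sf t).
Proof.
  intros Hl Hs. induction t as [|t IH].
  - constructor. apply isz_ev. eapply comp_ev; [|apply Hs].
    apply Forall2_app; [apply projs_all; auto|]. repeat constructor.
  - econstructor; [exact IH|].
    eapply eval_eq; [apply cond_ev; [apply proj_ev; reflexivity|apply succ_ev, proj_ev; reflexivity|]|].
    + apply isz_ev. eapply comp_ev; [|apply Hs].
      apply Forall2_app; [apply (projs_ev' [t; cval sf t] xs); simpl; auto|].
      constructor; [|constructor]. apply succ_ev, proj_ev; reflexivity.
    + reflexivity.
Qed.

Lemma cval_zero sf t : (forall t, sf t = 1) -> cval sf t = 0.
Proof.
  intros H. induction t; simpl. rewrite H; reflexivity.
  change (match cval sf t with 0 => b2n (sf (S t) =? 0) | S _ => S (cval sf t) end = 0).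
  rewrite IHt, H. reflexivity.
Qed.

Lemma cval_pos sf t : sf t = 0 -> 1 <= cval sf t.
Proof.
  intros H. destruct t; simpl. rewrite H; simpl; lia.
  change (1 <= match cval sf t with 0 => b2n (sf (S t) =? 0) | S _ => S (cval sf t) end).
  destruct (cval sf t). rewrite H; simpl; lia. lia.
Qed.

Lemma cval_step sf t : 1 <= cval sf t -> cval sf (S t) = S (cval sf t).
Proof.
  intros H. change (match cval sf t with 0 => b2n (sf (S t) =? 0) | S _ => S (cval sf t) end = S (cval sf t)).
  destruct (cval sf t); [lia|reflexivity].
Qed.

Lemma cval_mono sf t t' : t <= t' -> cval sf t <= cval sf t'.
Proof.
  induction 1; auto.
  change (cval sf t <= match cval sf m with 0 => b2n (sf (S m) =? 0) | S _ => S (cval sf m) end).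
  destruct (cval sf m); lia.
Qed.

Lemma cval_from sf t0 k : sf t0 = 0 -> cval sf (t0 + k) = cval sf t0 + k.
Proof.
  intros H. induction k.
  - rewrite !Nat.add_0_r; reflexivity.
  - rewrite Nat.add_succ_r, cval_step, IHk; [lia|]. rewrite IHk. pose proof (cval_pos sf t0 H). lia.
Qed.

Definition Wp pR L := PMu (IsZ (PComp pR (projs 1 L ++ [PProj 0]))).

Definition Fprog pG pR pS pLT L :=
  PComp (PComp (ChainP pLT) [PProj 2; PProj 0])
    [PComp pG (projs 0 L); Wp pR L; PComp (Cprog pS L) (PProj L :: projs 0 L)].

Lemma part2max a l D lt rho (HD : computable_poset D lt rho) :
  (forall d, exists e, lt d e) ->
  forall (G F : bsp a l -> option D) (Z : bsp a l -> Prop),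
    pcomp_fun rho a l G -> sigma1_and_pi1 a l Z -> restriction_of F G Z ->
    MaxPR lt rho a l F.
Proof.
  intros Hnomax G F Z [pG HpG] [R [Sr [[pR HpR] [[pS HpS] HZ]]]] Hres.
  destruct HD as (irr & trans & inj & surj & [pLT HpLT]).
  destruct (ltf_exists lt rho pLT HpLT) as [ltf [HLT Hltf]].
  set (L := S (length l)).
  assert (Hlen : forall x, length (enc a l x) = L) by (intros; apply enc_len).
  assert (Hsucc : forall m, exists k, eval (SuccMu pLT) [m] k /\ lt (rho m) (rho k)).
  { intros m. destruct (Hnomax (rho m)) as [e He]. destruct (surj e) as [n <-].
    destruct (least_zero (fun k => b2n (ltf m k =? 0))) as [k [Hk1 Hk2]].
    { exists n. assert (ltf m n <> 0) by (apply Hltf; auto). destruct (ltf m n); [contradiction|reflexivity]. }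
    exists k. split.
    - apply mu_ev with (h := fun k => b2n (ltf m k =? 0)); auto.
      intros j. apply isz_ev. eapply comp_ev; [|apply HLT]. repeat constructor.
    - apply Hltf. simpl in Hk1. destruct (ltf m k); [discriminate|lia]. }
  set (succf := fun m => proj1_sig (constructive_indefinite_description _ (Hsucc m))).
  assert (Hsf : forall m, eval (SuccMu pLT) [m] (succf m) /\ lt (rho m) (rho (succf m))).
  { intros m. exact (proj2_sig (constructive_indefinite_description _ (Hsucc m))). }
  assert (chain_lt : forall d k k', k < k' -> lt (rho (Nat.iter k succf d)) (rho (Nat.iter k' succf d))).
  { intros d k k' H. induction H.
    - simpl. apply Hsf.
    - simpl. eapply trans; [exact IHle|apply Hsf]. }
  assert (chain_le : forall d k k', k <= k' -> le_of lt (rho (Nat.iter k succf d)) (rho (Nat.iter k' succf d))).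
  { intros d k k' H. destruct (Nat.eq_dec k k') as [->|N]; [left; auto|right; apply chain_lt; lia]. }
  set (rf := fun x t => if excluded_middle_informative (R x t) then 1 else 0).
  set (sf := fun x t => if excluded_middle_informative (Sr x t) then 1 else 0).
  assert (HR : forall x t, eval pR (enc a l x ++ [t]) (rf x t)).
  { intros x t. unfold rf. destruct (excluded_middle_informative _); apply HpR; auto. }
  assert (HS : forall x t, eval pS (enc a l x ++ [t]) (sf x t)).
  { intros x t. unfold sf. destruct (excluded_middle_informative _); apply HpS; auto. }
  assert (HT : forall x s post, eval (IsZ (PComp pR (projs 1 L ++ [PProj 0]))) (s :: enc a l x ++ post) (b2n (rf x s =? 0))).
  { intros x s post. apply isz_ev. eapply comp_ev; [|apply HR].
    apply Forall2_app; [apply (projs_ev [s] (enc a l x) post); simpl; auto|]. repeat constructor. }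
  assert (HC : forall x t, eval (PComp (Cprog pS L) (PProj L :: projs 0 L)) (enc a l x ++ [t]) (cval (sf x) t)).
  { intros x t. eapply comp_ev; [|apply Cprog_ev; auto].
    constructor.
    - constructor. rewrite nth_error_app2 by (rewrite Hlen; lia). rewrite Hlen, Nat.sub_diag. reflexivity.
    - apply (projs_ev [] (enc a l x) [t]); auto. }
  assert (Fsem : forall x t y, eval (Fprog pG pR pS pLT L) (enc a l x ++ [t]) y <->
     exists d, G x = Some (rho d) /\ (exists s, R x s) /\ y = Nat.iter (cval (sf x) t) succf d).
  { intros x t y. split.
    - intros E. inversion E as [| | |f0 gs0 a0 ys y0 H2 Hf| | |]; subst.
      inversion H2 as [|g1 v1 gs1 ys1 E1 H3]; subst.
      inversion H3 as [|g2 v2 gs2 ys2 E2 H4]; subst.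
      inversion H4 as [|g3 v3 gs3 ys3 E3 H5]; subst.
      inversion H5; subst.
      inversion E1 as [| | |f1 gs1' a1 ys1' y1 H6 Hf1| | |]; subst.
      assert (ys1' = enc a l x).
      { eapply Forall2_det; [exact H6|]. apply (projs_ev [] (enc a l x) [t]); auto. }
      subst ys1'.
      assert (v3 = cval (sf x) t) by (eapply eval_det; eauto). subst v3.
      inversion E2 as [| | | | | |f2 a2 n2 H7 H8]; subst.
      assert (Hr : b2n (rf x v2 =? 0) = 0).
      { eapply eval_det; [|exact H7]. apply (HT x v2 [t]). }
      exists v1. split; [apply HpG; auto|split].
      + exists v2. unfold rf in Hr. destruct (excluded_middle_informative (R x v2)); auto. discriminate.
      + eapply eval_det; [exact Hf|]. eapply comp_ev; [|apply chain_ev; intros; apply Hsf].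
        repeat constructor.
    - intros (d & Hd & [s0 Hs0] & ->).
      destruct (least_zero (fun s => b2n (rf x s =? 0))) as [w [Hw1 Hw2]].
      { exists s0. unfold rf. destruct (excluded_middle_informative (R x s0)); [reflexivity|contradiction]. }
      eapply comp_ev; [|eapply comp_ev; [|apply chain_ev; intros; apply Hsf]; repeat constructor].
      constructor; [|constructor; [|constructor; [apply HC|constructor]]].
      + eapply comp_ev; [|apply HpG; exact Hd]. apply (projs_ev [] (enc a l x) [t]); auto.
      + apply mu_ev with (h := fun s => b2n (rf x s =? 0)) (k := w); [intros j; apply (HT x j [t])|exact Hw1|exact Hw2].
      + reflexivity.
      + reflexivity. }
  destruct (prog_fun2 rho inj a l (Fprog pG pR pS pLT L)) as [f [Hf2 Hfe]].
  assert (fval : forall x t e, f x t = Some e <->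
     exists d, G x = Some (rho d) /\ (exists s, R x s) /\ e = rho (Nat.iter (cval (sf x) t) succf d)).
  { intros x t e. split.
    - intros H. destruct (surj e) as [m <-]. apply Hfe, Fsem in H as (d & H1 & H2 & H3).
      exists d. subst m. auto.
    - intros (d & H1 & H2 & ->). apply Hfe, Fsem. eauto. }
  exists f. split; [exact Hf2|split].
  - intros x t t' d e Htt' Hd He.
    apply fval in Hd as (d1 & E1 & _ & ->). apply fval in He as (d2 & E2 & _ & ->).
    rewrite E1 in E2. injection E2 as E2. apply inj in E2. subst d2.
    apply chain_le. apply cval_mono; auto.
  - intros x e. destruct (classic (Z x)) as [Hz|Hz].
    + assert (EF : F x = G x) by (apply (proj1 (Hres x)); auto).
      apply HZ in Hz as [HRx HSx].
      assert (C0 : forall t, cval (sf x) t = 0).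
      { intros t. apply cval_zero. intros t'. unfold sf. destruct (excluded_middle_informative _); auto.
        exfalso; auto. }
      assert (fv0 : forall t e, f x t = Some e <-> exists d, G x = Some (rho d) /\ e = rho d).
      { intros t e'. rewrite fval. rewrite C0. simpl. split.
        - intros (d & H1 & _ & H3); eauto.
        - intros (d & H1 & H3); eauto. }
      rewrite EF. split.
      * intros HG. destruct (surj e) as [m <-].
        assert (Hv : forall e', values f x e' <-> e' = rho m).
        { intros e'. unfold values. split.
          - intros [t Ht]. apply fv0 in Ht as (d & Hd & ->). rewrite HG in Hd. injection Hd as Hd.
            apply inj in Hd. subst; auto.
          - intros ->. exists 0. apply fv0. eauto. }
        split; [split|split].
        -- exists (rho m). apply Hv; auto.
        -- exists [rho m]. intros e' He'. apply Hv in He'. subst; left; auto.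
        -- apply Hv; auto.
        -- intros e' He'. apply Hv in He'. subst. left; auto.
      * intros [_ [[t Ht] _]]. apply fv0 in Ht as (d & Hd & ->). exact Hd.
    + assert (EF : F x = None) by (apply (proj2 (Hres x)); auto).
      rewrite EF. split; [discriminate|].
      intros [[[e0 [t0 H0]] [Lst HL]] _]. exfalso.
      apply fval in H0 as (d & Hd & HRx & _).
      assert (Hs : exists t1, sf x t1 = 0).
      { destruct (classic (exists t1, ~ Sr x t1)) as [[t1 Ht1]|N].
        - exists t1. unfold sf. destruct (excluded_middle_informative _); [contradiction|reflexivity].
        - exfalso. apply Hz, HZ. split; auto. intros t. apply NNPP. intros K. apply N. eauto. }
      destruct Hs as [t1 Ht1].
      apply (list_inj (fun k => rho (Nat.iter (cval (sf x) t1 + k) succf d)) Lst).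
      * intros k. apply HL. exists (t1 + k). apply fval. exists d. split; auto. split; auto.
        rewrite cval_from; auto.
      * intros i j Eij. destruct (Nat.lt_trichotomy i j) as [H|[H|H]]; auto; exfalso.
        -- assert (K := chain_lt d (cval (sf x) t1 + i) (cval (sf x) t1 + j) ltac:(lia)).
           rewrite Eij in K. apply (irr _ K).
        -- assert (K := chain_lt d (cval (sf x) t1 + j) (cval (sf x) t1 + i) ltac:(lia)).
           rewrite Eij in K. apply (irr _ K).
Qed.
Lemma poset_flip D lt rho : computable_poset D lt rho -> computable_poset D (fun d e => lt e d) rho.
Proof.
  intros (irr & trans & inj & surj & [p Hp]).
  split; [auto|split; [eauto|split; [auto|split; [auto|]]]].
  exists (PComp p [PProj 1; PProj 0]). intros m n. split.
  - intros H. eapply comp_ev; [|apply (proj1 (Hp n m)); exact H]. repeat constructor.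
  - intros H. eapply comp_ev; [|apply (proj2 (Hp n m)); exact H]. repeat constructor.
Qed.

Lemma max_flip_min D lt rho a l F : MaxPR (fun d e : D => lt e d) rho a l F -> MinPR lt rho a l F.
Proof.
  intros [f [Hf [Hinc Hmax]]]. exists f. split; [exact Hf|split].
  - intros x t t' d e H1 H2 H3. destruct (Hinc x t t' d e H1 H2 H3) as [E|E]; [left; auto|right; auto].
  - intros x d. split.
    + intros H. apply Hmax in H as [H1 [H2 H3]]. split; auto. split; auto. intros e He. destruct (H3 e He); [left|right]; auto.
    + intros [H1 [H2 H3]]. apply Hmax. split; auto. split; auto. intros e He. destruct (H3 e He); [left|right]; auto.
Qed.

Theorem mainTheorem9 (a : atom) (l : list atom)
    (D : Type) (lt : D -> D -> Prop) (rho : nat -> D)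
    (HD : computable_poset D lt rho) :
  (* 1 *)
  (forall F : bsp a l -> option D,
      MaxPR lt rho a l F -> MinPR lt rho a l F ->
      exists (G : bsp a l -> option D) (Z : bsp a l -> Prop),
        pcomp_fun rho a l G /\ sigma1_and_pi1 a l Z /\ restriction_of F G Z) /\
  (forall F : bsp a l -> option D,
      (forall x, F x <> None) ->
      MaxPR lt rho a l F -> MinPR lt rho a l F -> pcomp_fun rho a l F) /\
  (* 2 *)
  ((forall d, exists e, lt d e) ->
     forall (G F : bsp a l -> option D) (Z : bsp a l -> Prop),
       pcomp_fun rho a l G -> sigma1_and_pi1 a l Z -> restriction_of F G Z ->
       MaxPR lt rho a l F) /\
  ((forall d, exists e, lt e d) ->
     forall (G F : bsp a l -> option D) (Z : bsp a l -> Prop),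
       pcomp_fun rho a l G -> sigma1_and_pi1 a l Z -> restriction_of F G Z ->
       MinPR lt rho a l F) /\
  (* 3 *)
  ((forall d, exists e, lt d e) -> (forall d, exists e, lt e d) ->
     forall F : bsp a l -> option D,
       (MaxPR lt rho a l F /\ MinPR lt rho a l F) <->
       (exists (G : bsp a l -> option D) (Z : bsp a l -> Prop),
          pcomp_fun rho a l G /\ sigma1_and_pi1 a l Z /\ restriction_of F G Z)).
Proof.
  split; [|split; [|split; [|split]]].
  - intros F H1 H2. apply (part1 a l D lt rho HD F H1 H2).
  - intros F Htot H1 H2. destruct (part1 a l D lt rho HD F H1 H2) as [G [Z [[p Hp] [_ Hres]]]].
    exists p. intros x m. rewrite Hp.
    destruct (classic (Z x)) as [Hz|Hz].
    + rewrite (proj1 (Hres x) Hz). tauto.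
    + exfalso. apply (Htot x). apply (proj2 (Hres x) Hz).
  - intros Hn G F Z H1 H2 H3. eapply part2max; eauto.
  - intros Hn G F Z H1 H2 H3. apply max_flip_min.
    eapply part2max; [apply poset_flip; exact HD|exact Hn|eauto..].
  - intros Hn1 Hn2 F. split.
    + intros [H1 H2]. apply (part1 a l D lt rho HD F H1 H2).
    + intros [G [Z [H1 [H2 H3]]]]. split.
      * eapply part2max; eauto.
      * apply max_flip_min. eapply part2max; [apply poset_flip; exact HD|exact Hn2|eauto..].
Qed.
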